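(* Let $p$ be a prime, $k \in \mathbb{N}$, and $G_1, \dots, G_k$ finite-dimensional vector spaces over $\mathbb{F}_p$. For $\varepsilon > 0$ set $b(\varepsilon) = (\varepsilon/1000)^{2^{2k+2}}$ and $n(\varepsilon) = \lceil 10 \varepsilon^{-2^{k+1}} \rceil$. Let $f \colon G_1 \times \cdots \times G_k \to \mathbb{D}$ and let $\mu_1, \dots, \mu_n \in \operatorname{Spec}^{\mathrm{ml}}_{\varepsilon}(f)$ be multilinear forms such that $\operatorname{bias}(\mu_i - \mu_j) \leq b(\varepsilon)$ for all $i \neq j$. Then $n < n(\varepsilon)$.
   Context: $\mathbb{D} = \{z \in \mathbb{C} : |z| \leq 1\}$, $\omega = e^{2\pi i/p}$, $\mathbb{E}$ is the uniform average. For a multilinear form $\beta$ on $G_1 \times \cdots \times G_k$, $\operatorname{bias}\beta = \mathbb{E}_{x_1 \in G_1, \dots, x_k \in G_k}\omega^{\beta(x_1, \dots, x_k)}$. The box norm of $g \colon G_1 \times \cdots \times G_k \to \mathbb{C}$ is given by $\|g\|_{\square^k}^{2^k} = \mathbb{E}_{x_1, y_1 \in G_1, \dots, x_k, y_k \in G_k} \prod_{I \subseteq [k]} \operatorname{Conj}^{|I|} g(x_I, y_{[k]\setminus I})$, where $(x_I, y_{[k]\setminus I})$ has $i$-th coordinate $x_i$ if $i \in I$ and $y_i$ otherwise, and $\operatorname{Conj}^j$ is complex conjugation applied $j$ times. $\operatorname{Spec}^{\mathrm{ml}}_{\varepsilon}(f) = \{\mu \text{ multilinear form } G_1 \times \cdots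 \times G_k \to \mathbb{F}_p : \|f\omega^{\mu}\|_{\square^k} \geq \varepsilon\}$. *)

(* Defs.v *)
From HB Require Import structures.
From mathcomp Require Import all_boot all_order all_algebra.
From mathcomp Require Import reals trigo.
From mathcomp Require Import complex.
Set Implicit Arguments. Unset Strict Implicit. Unset Printing Implicit Defensive.
Import Order.TTheory GRing.Theory Num.Theory Num.Def.
Local Open Scope ring_scope.

(* G_i = 'rV['F_p]_(d i), a d_i-dimensional F_p-vector space (every
   finite-dimensional F_p-space is isomorphic to one of these).
   G_1 x ... x G_k is the finite type of dependent finite functions. *)
Definition prodG (p k : nat) (d : 'I_k -> nat) : finType :=
  {dffun forall i : 'I_k, 'rV['F_p]_(d i)}.

Definition updG (p k : nat) (d : 'I_k -> nat) (x : prodG p d) (i : 'I_k)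
  (y : 'rV['F_p]_(d i)) : prodG p d :=
  [ffun j => dfwith (fun j => x j) y j].

Definition multilinear (p k : nat) (d : 'I_k -> nat) (mu : prodG p d -> 'F_p) :=
  forall (i : 'I_k) (x : prodG p d) (a : 'F_p) (y z : 'rV['F_p]_(d i)),
    mu (updG x (a *: y + z)) = a * mu (updG x y) + mu (updG x z).

Definition omega (R : realType) (p : nat) : R[i] :=
  Complex (cos (2 * pi / p%:R)) (sin (2 * pi / p%:R)).

(* omega^{a} for a in F_p (well defined since omega^p = 1) *)
Definition omega_pow (R : realType) (p : nat) (a : 'F_p) : R[i] :=
  omega R p ^+ (nat_of_ord a).

Definition avg (R : realType) (T : finType) (F : T -> R[i]) : R[i] :=
  (#|T|%:R)^-1 * \sum_(t : T) F t.

Definition bias (R : realType) (p k : nat) (d : 'I_k -> nat)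
  (beta : prodG p d -> 'F_p) : R[i] :=
  avg (fun x : prodG p d => omega_pow R (beta x)).

Definition mixG (p k : nat) (d : 'I_k -> nat) (I : {set 'I_k})
  (x y : prodG p d) : prodG p d :=
  [ffun i => if i \in I then x i else y i].

Definition box_pow (R : realType) (p k : nat) (d : 'I_k -> nat)
  (g : prodG p d -> R[i]) : R[i] :=
  avg (fun xy : prodG p d * prodG p d =>
    \prod_(I : {set 'I_k}) iter #|I| (@conjC _) (g (mixG I xy.1 xy.2))).

Definition box_norm (R : realType) (p k : nat) (d : 'I_k -> nat)
  (g : prodG p d -> R[i]) : R[i] :=
  (2 ^ k)%N.-root (box_pow g).

Definition in_spec_ml (R : realType) (p k : nat) (d : 'I_k -> nat)
  (eps : R) (f : prodG p d -> R[i]) (mu : prodG p d -> 'F_p) : Prop :=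
  multilinear mu /\ real_complex R eps <= box_norm (fun x => f x * omega_pow R (mu x)).

Definition b_eps (R : realType) (k : nat) (eps : R) : R :=
  (eps / 1000) ^+ (2 ^ (2 * k + 2)).

Definition n_eps (R : realType) (k : nat) (eps : R) : int :=
  Num.ceil (10 * eps ^- (2 ^ (k + 1))).

(* Main.v *)
Require Import Defs.
From HB Require Import structures.
From mathcomp Require Import all_boot all_order all_algebra.
From mathcomp Require Import reals trigo.
From mathcomp Require Import complex.
From mathcomp Require Import ring lra zify.
Import Order.TTheory GRing.Theory Num.Theory Num.Def.
Local Open Scope ring_scope.
Section Omega.
Variable R : realType.
Local Notation C := R[i].
Definition cis (a : R) : C := Complex (cos a) (sin a).
Lemma cisD a b : cis (a + b) = cis a * cis b.
Proof. rewrite /cis cosD sinD. apply/eqP; rewrite eq_complex /=. apply/andP; split; apply/eqP; ring. Qed.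
Lemma cis0 : cis 0 = 1.
Proof. by rewrite /cis cos0 sin0. Qed.
Lemma cisMn a m : cis a ^+ m = cis (a *+ m).
Proof. elim: m => [|m IH]; first by rewrite expr0 mulr0n cis0.
by rewrite exprS IH mulrS cisD. Qed.
Lemma conj_cis a : conjC (cis a) * cis a = 1.
Proof. rewrite /cis /=. apply/eqP; rewrite eq_complex /=. apply/andP; split; apply/eqP.
  by rewrite -(cos2Dsin2 a); ring. ring. Qed.

Variable p : nat.
Hypothesis pp : prime p.

Lemma omega_p : omega R p ^+ p = 1.
Proof.
have p0 : (p%:R : R) != 0 by rewrite pnatr_eq0 -lt0n prime_gt0.
rewrite /omega -/(cis _) cisMn.
have -> : 2 * pi / p%:R *+ p = pi *+ 2 :> R.
  by rewrite -[_ *+ p]mulr_natr divfK // mulrC mulr_natr.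
by rewrite /cis cos2pi sin2pi.
Qed.

Lemma omega_pow_nat m : @omega_pow R p (m%:R) = omega R p ^+ m.
Proof.
rewrite /omega_pow val_Fp_nat //. rewrite {2}(divn_eq m p) exprD mulnC exprM omega_p expr1n mul1r //.
Qed.

Lemma Fp_val (a : 'F_p) : a = (nat_of_ord a)%:R.
Proof. by rewrite natr_Zp. Qed.

Lemma omega_powD a b : @omega_pow R p (a + b) = @omega_pow R p a * @omega_pow R p b.
Proof. by rewrite [a]Fp_val [b]Fp_val -natrD !omega_pow_nat exprD. Qed.

Lemma omega_pow0 : @omega_pow R p 0 = 1.
Proof. by rewrite /omega_pow expr0. Qed.

Lemma omega_pow_sum (I : Type) (r : seq I) (P : pred I) (F : I -> 'F_p) :
  @omega_pow R p (\sum_(i <- r | P i) F i) = \prod_(i <- r | P i) @omega_pow R p (F i).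
Proof. exact: (big_morph _ omega_powD omega_pow0). Qed.

Lemma omega_conj_mul a : conjC (@omega_pow R p a) * @omega_pow R p a = 1.
Proof. by rewrite /omega_pow (rmorphXn conjC) -exprMn conj_cis expr1n. Qed.

Lemma omega_pow_neq0 a : @omega_pow R p a != 0.
Proof. apply/negP => /eqP H. have := omega_conj_mul a. rewrite H mulr0 => /eqP. by rewrite eq_sym oner_eq0. Qed.

Lemma omega_powN a : conjC (@omega_pow R p a) = @omega_pow R p (- a).
Proof.
apply: (mulIf (omega_pow_neq0 a)). by rewrite omega_conj_mul -omega_powD addNr omega_pow0.
Qed.

Lemma norm_omega_pow a : `|@omega_pow R p a| = 1.
Proof.
apply/eqP; rewrite -(@sqrp_eq1 _ `|@omega_pow R p a|) //.
by rewrite normCK mulrC omega_conj_mul.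
Qed.
End Omega.
Lemma setcond (T : finType) (i : T) (I J : {set T}) : i \notin J ->
  [&& (i |: I \subset i |: J), i \in i |: I & (i |: I) :\ i == I] = (I \subset J).
Proof.
move=> iJ; rewrite setU11 andTb.
apply/idP/idP.
- case/andP => /subsetP H1 /eqP H2. apply/subsetP => j jI.
  have : j \in i |: J by apply: H1; rewrite in_setU1 jI orbT.
  rewrite in_setU1; case/orP => [/eqP ji|//].
  by move: jI; rewrite ji -H2 in_setD1 eqxx.
- move=> IJ. have iI : i \notin I by apply: contra iJ => /(subsetP IJ).
  by rewrite setU1K // eqxx andbT; apply: setUS.
Qed.

Lemma set_ind (T : finType) (P : {set T} -> Prop) :
  P set0 -> (forall (i : T) (J : {set T}), i \notin J -> P J -> P (i |: J)) -> forall J, P J.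
Proof.
move=> P0 PS J. move: {2}#|J| (erefl #|J|) => m. elim: m J => [|m IHm] J HJ.
  by move/eqP: HJ; rewrite cards_eq0 => /eqP ->.
have /set0Pn [i iJ] : J != set0 by rewrite -card_gt0 HJ.
rewrite -(setD1K iJ). apply: PS; first by rewrite setD11.
apply: IHm. by move: HJ; rewrite (cardsD1 i J) iJ add1n => [[]].
Qed.

Section Multi.
Variables (p k : nat) (d : 'I_k -> nat) (mu : prodG p d -> 'F_p).
Hypothesis Hmu : multilinear mu.
Variables (x y : prodG p d).

Definition ptJ (z : prodG p d) (J I : {set 'I_k}) : prodG p d :=
  [ffun i => if i \in J then (if i \in I then x i else y i) else z i].
Definition tgJ (z : prodG p d) (J : {set 'I_k}) : prodG p d :=
  [ffun i => if i \in J then y i - x i else z i].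

Lemma multi_alt_step (z : prodG p d) (J : {set 'I_k}) (i : 'I_k) : i \notin J ->
  (forall z, \sum_(I : {set 'I_k} | I \subset J) (-1)^+#|I| * mu (ptJ z J I) = mu (tgJ z J)) ->
  \sum_(I : {set 'I_k} | I \subset i |: J) (-1)^+#|I| * mu (ptJ z (i |: J) I) = mu (tgJ z (i |: J)).
Proof.
move=> iJ IH.
rewrite (bigID (fun I : {set 'I_k} => i \in I)) /= addrC.
have E1 : \sum_(I : {set 'I_k} | (I \subset i |: J) && (i \notin I)) (-1)^+#|I| * mu (ptJ z (i |: J) I)
   = \sum_(I : {set 'I_k} | I \subset J) (-1)^+#|I| * mu (ptJ (updG z (y i)) J I).
  apply: eq_big => [I|I /andP [IJ iI]].
    by rewrite -subsetD1 setU1K.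
  congr (_ * mu _); apply/ffunP => j; rewrite !ffunE in_setU1.
  have [<-|ij] := eqVneq i j; first by rewrite /= (negbTE iJ) (negbTE iI) dfwith_in.
  by rewrite /= dfwith_out.
have E2 : \sum_(I : {set 'I_k} | (I \subset i |: J) && (i \in I)) (-1)^+#|I| * mu (ptJ z (i |: J) I)
   = - \sum_(I : {set 'I_k} | I \subset J) (-1)^+#|I| * mu (ptJ (updG z (x i)) J I).
  rewrite -sumrN.
  rewrite (reindex_onto (fun I => i |: I) (fun I => I :\ i)) /=; last first.
    by move=> I /andP [_ iI]; rewrite setD1K.
  apply: eq_big => [I|I].
    by rewrite -andbA setcond.
  rewrite -andbA setcond // => IJ.
  have iI : i \notin I by apply: contra iJ => /(subsetP IJ).
  rewrite cardsU1 iI add1n exprS mulN1r mulNr.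
  congr (- (_ * mu _)); apply/ffunP => j; rewrite !ffunE !in_setU1.
  have [<-|ij] := eqVneq i j; first by rewrite /= (negbTE iJ) dfwith_in.
  by rewrite /= dfwith_out.
rewrite E1 E2 !IH.
have T1 : forall (v : 'rV['F_p]_(d i)), tgJ (updG z v) J = updG (tgJ z J) v.
  move=> v; apply/ffunP => j; rewrite !ffunE.
  have [<-|ij] := eqVneq i j; first by rewrite (negbTE iJ) !dfwith_in.
  by rewrite !dfwith_out // ffunE.
have T2 : tgJ z (i |: J) = updG (tgJ z J) ((-1) *: x i + y i).
  apply/ffunP => j; rewrite !ffunE in_setU1.
  have [<-|ij] := eqVneq i j; first by rewrite /= dfwith_in scaleN1r addrC.
  by rewrite /= dfwith_out // ffunE.
by rewrite !T1 T2 Hmu mulN1r addrC.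
Qed.

Lemma multi_alt (J : {set 'I_k}) (z : prodG p d) :
  \sum_(I : {set 'I_k} | I \subset J) (-1)^+#|I| * mu (ptJ z J I) = mu (tgJ z J).
Proof.
elim/set_ind: J z => [z|i J iJ IH z]; last exact: multi_alt_step.
rewrite (big_pred1 set0); last by move=> I; rewrite subset0.
rewrite cards0 expr0 mul1r. congr (mu _); apply/ffunP => j; by rewrite !ffunE in_set0.
Qed.

Lemma multi_mix :
  \sum_(I : {set 'I_k}) (-1)^+#|I| * mu (mixG I x y) = mu [ffun i => y i - x i].
Proof.
have -> : [ffun i => y i - x i] = tgJ x setT by apply/ffunP => j; rewrite !ffunE in_setT.
rewrite -multi_alt; apply: eq_big => [I|I _]; first by rewrite subsetT. congr (_ * mu _); apply/ffunP => j; by rewrite !ffunE in_setT.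
Qed.
End Multi.
Arguments multi_mix {p k d mu} Hmu x y.
Section Avg.
Variable R : realType.
Local Notation C := R[i].
Variable T : finType.
Hypothesis T0 : (0 < #|T|)%N.

Lemma cardT_neq0 : (#|T|%:R : C) != 0.
Proof. by rewrite pnatr_eq0 -lt0n. Qed.

Lemma eq_avg (F G : T -> C) : (forall t, F t = G t) -> avg F = avg G.
Proof. by move=> H; rewrite /avg; congr (_ * _); apply: eq_bigr => t _. Qed.

Lemma avg_const (c : C) : avg (fun _ : T => c) = c.
Proof. rewrite /avg sumr_const. change (#|T|%:R^-1 * (c *+ #|T|) = c). rewrite -[c *+ _]mulr_natl mulrA mulVf ?mul1r //; exact: cardT_neq0. Qed.

Lemma avgD (F G : T -> C) : avg (fun t => F t + G t) = avg F + avg G.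
Proof. by rewrite /avg big_split mulrDr. Qed.

Lemma avgMl (c : C) (F : T -> C) : avg (fun t => c * F t) = c * avg F.
Proof. by rewrite /avg -mulr_sumr mulrCA. Qed.

Lemma avgN (F : T -> C) : avg (fun t => - F t) = - avg F.
Proof. by rewrite /avg sumrN mulrN. Qed.

Lemma avg_sum (I : finType) (F : I -> T -> C) :
  avg (fun t => \sum_(j : I) F j t) = \sum_(j : I) avg (F j).
Proof. by rewrite /avg exchange_big mulr_sumr. Qed.

Lemma avg_le (F G : T -> C) : (forall t, F t <= G t) -> avg F <= avg G.
Proof.
move=> H; rewrite /avg; apply: ler_wpM2l; first by rewrite invr_ge0 ler0n.
by apply: ler_sum => t _.
Qed.

Lemma avg_norm (F : T -> C) : `|avg F| <= avg (fun t => `|F t|).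
Proof.
rewrite /avg normrM normfV normr_nat. apply: ler_wpM2l; first by rewrite invr_ge0 ler0n.
exact: ler_norm_sum.
Qed.

Lemma avg_jensen (a : T -> C) : (forall t, 0 <= a t) -> (avg a) ^+ 2 <= avg (fun t => a t ^+ 2).
Proof.
move=> a0. set m := avg a.
have m0 : 0 <= m by rewrite /m -(avg_const 0); apply: avg_le.
have H : 0 <= avg (fun t => (a t - m) ^+ 2).
  rewrite -(avg_const 0); apply: avg_le => t. rewrite -realEsqr. 
  by apply: rpredB; apply: ger0_real.
have E : avg (fun t => (a t - m) ^+ 2) = avg (fun t => a t ^+ 2) - m ^+ 2.
  rewrite (@eq_avg _ (fun t => (a t ^+ 2 + (- (m *+ 2)) * a t) + m ^+ 2)); last first.
    by move=> t; rewrite sqrrB; ring.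
  rewrite !avgD avgMl !avg_const -/m. ring.
by rewrite -subr_ge0 -E.
Qed.
End Avg.
Section Trans.
Variables (R : realType) (p k : nat) (d : 'I_k -> nat).
Local Notation T := (prodG p d).

Lemma cardG_gt0 : (0 < #|T|)%N.
Proof. apply/card_gt0P; exists [ffun i => 0]; done. Qed.
Lemma cardG2_gt0 : (0 < #|{: T * T}|)%N.
Proof. by rewrite card_prod muln_gt0 cardG_gt0. Qed.

Definition dif (t : T * T) : T := [ffun i => t.2 i - t.1 i].

Lemma avg_dif (h : T -> R[i]) : avg (fun t : T * T => h (dif t)) = avg h.
Proof.
have N0 : (#|T|%:R : R[i]) != 0 by rewrite pnatr_eq0 -lt0n cardG_gt0.
rewrite /avg card_prod natrM invfM -mulrA. congr (_ * _).
rewrite (eq_bigr (fun t => (fun x y => h (dif (x, y))) t.1 t.2)); last by case.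
rewrite -(pair_big predT predT (fun x y => h (dif (x, y)))) /=.
have inj : forall x : T, injective (fun y => dif (x, y)).
  move=> x y1 y2 /ffunP H; apply/ffunP => i; move: (H i); rewrite !ffunE; exact: subIr.
rewrite (eq_bigr (fun _ => \sum_z h z)); last first.
  by move=> x _; rewrite [RHS](reindex_inj (inj x)).
rewrite sumr_const. change (#|T|%:R^-1 * ((\sum_z h z) *+ #|T|) = \sum_z h z).
by rewrite -[(\sum_z h z) *+ _]mulr_natl mulrA mulVf ?mul1r.
Qed.
End Trans.
Arguments dif {p k d}.
Lemma n_eps_gt0 (R : realType) k (eps : R) : 0 < eps -> (0 < n_eps k eps)%R.
Proof.
move=> e0. rewrite /n_eps -(ltr_int R). apply: (lt_le_trans _ (ceil_ge _)).
by rewrite mulr_gt0 // invr_gt0 exprn_gt0.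
Qed.

Lemma final_real (R : realType) k (eps : R) (n : nat) : 0 < eps -> eps <= 1 ->
  (n%:R * eps^+(2^k))^+2 <= n%:R + n%:R^+2 * b_eps k eps -> (n%:Z < n_eps k eps)%R.
Proof.
move=> e0 e1 H.
case: n H => [|n] H; first exact: n_eps_gt0.
set E := eps ^+ (2 ^ (k + 1)).
have E0 : 0 < E by rewrite exprn_gt0.
have HE : (n.+1%:R * eps^+(2^k))^+2 = n.+1%:R^+2 * E.
  by rewrite exprMn -exprM /E addn1 expnSr.
have Hb : b_eps k eps <= E / 1000.
  rewrite /b_eps expr_div_n. apply: ler_pM.
  - by rewrite exprn_ge0 // ltW.
  - by rewrite invr_ge0 exprn_ge0.
  - apply: ler_wiXn2l => //; first exact: ltW.
    apply: leq_pexp2l => //; lia.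
  - rewrite lef_pV2 ?posrE ?exprn_gt0 //. apply: ler_eXnr; first by rewrite expn_gt0.
    lra.
rewrite HE in H.
set m : R := n.+1%:R in H *.
have m1 : 1 <= m by rewrite /m ler1n.
have Hm : m * E < 10.
  have H2 : m ^+ 2 * E <= m + m ^+ 2 * (E / 1000).
    apply: (le_trans H). rewrite lerD2l; apply: ler_wpM2l => //. by rewrite exprn_ge0 // (le_trans _ m1).
  nra.
rewrite /n_eps -(ltr_int R). apply: (lt_le_trans _ (ceil_ge _)).
rewrite -/E -pmulrn -/m ltr_pdivlMr //.
Qed.
Section Main.
Variables (R : realType) (p k : nat) (d : 'I_k -> nat).
Hypothesis pp : prime p.
Local Notation T := (prodG p d).
Local Notation C := R[i].

Lemma iter_conj n (z : C) : iter n conjC z = if odd n then conjC z else z.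
Proof. elim: n => [|n IH] //=. rewrite IH; case: (odd n) => //=; by rewrite conjCK. Qed.

Lemma iter_conjM n (a b : C) : iter n conjC (a * b) = iter n conjC a * iter n conjC b.
Proof. rewrite !iter_conj; case: (odd n) => //; exact: rmorphM. Qed.

Lemma iter_conj_norm n (a : C) : `|iter n conjC a| = `|a|.
Proof. rewrite iter_conj; case: (odd n) => //; exact: norm_conjC. Qed.

Lemma iter_conj_omega n a : iter n conjC (@omega_pow R p a) = @omega_pow R p ((-1)^+n * a).
Proof.
rewrite iter_conj -signr_odd; case: (odd n).
  by rewrite expr1 mulN1r omega_powN.
by rewrite expr0 mul1r.
Qed.

Definition Fp (f : T -> C) (t : T * T) : C :=
  \prod_(I : {set 'I_k}) iter #|I| conjC (f (mixG I t.1 t.2)).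

Lemma box_formula (f : T -> C) (mu : T -> 'F_p) : multilinear mu ->
  box_pow (fun x => f x * @omega_pow R p (mu x)) =
  avg (fun t => Fp f t * @omega_pow R p (mu (dif t))).
Proof.
move=> Hmu. rewrite /box_pow. apply: eq_avg => t.
rewrite /Fp. under eq_bigr => I _ do rewrite iter_conjM iter_conj_omega.
rewrite big_split /= -omega_pow_sum //. by rewrite (multi_mix Hmu).
Qed.

Lemma Fp_norm (f : T -> C) t : (forall x, `|f x| <= 1) -> `|Fp f t| <= 1.
Proof.
move=> Hf. rewrite /Fp normr_prod. apply: prodr_ile1 => I _.
by rewrite iter_conj_norm normr_ge0 Hf.
Qed.
End Main.
Arguments Fp {R p k d}.

Theorem theorem32 (R : realType) (p : nat) (k : nat) (d : 'I_k -> nat)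
  (eps : R) (f : prodG p d -> R[i]) (n : nat) (mu : 'I_n -> prodG p d -> 'F_p) :
  prime p -> 0 < eps ->
  (forall x, `|f x| <= 1) ->
  (forall j, in_spec_ml eps f (mu j)) ->
  (forall j l, j != l ->
     bias R (fun x => mu j x - mu l x) <= real_complex R (b_eps k eps)) ->
  (n%:Z < n_eps k eps)%R.
Proof.
move=> pp e0 Hf Hspec Hbias.
case: n mu Hspec Hbias => [|n] mu Hspec Hbias; first exact: n_eps_gt0.
set e := eps ^+ (2 ^ k).
set P := fun j => box_pow (fun x => f x * @omega_pow R p (mu j x)).
have HP : forall j, real_complex R e <= P j.
  move=> j; case: (Hspec j) => Hm. rewrite /box_norm. set r := (2^k).-root _ => Hle.
  have ec0 : 0 < real_complex R eps by rewrite ltcR.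
  have r0 : 0 <= r := le_trans (ltW ec0) Hle.
  rewrite /e rmorphXn /P -(rootCK (expn_gt0 2 k) (box_pow _)) -/r.
  by apply: lerXn2r => //; rewrite nnegrE ltW.
have Pform : forall j, P j = avg (fun t => Fp f t * @omega_pow R p (mu j (dif t))).
  by move=> j; rewrite /P box_formula //; case: (Hspec j).
set S := fun t => \sum_j @omega_pow R p (mu j (dif t)).
have T0 := @cardG2_gt0 p k d.
have sumP : \sum_j P j = avg (fun t => Fp f t * S t).
  under eq_bigr => j _ do rewrite Pform.
  rewrite -avg_sum; apply: eq_avg => t; by rewrite /S mulr_sumr.
have normSum : `|\sum_j P j| <= avg (fun t => `|S t|).
  rewrite sumP; apply: le_trans; first exact: avg_norm. apply: avg_le => t.
  by rewrite normrM; apply: ler_piMl; [exact: normr_ge0 | exact: Fp_norm].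
have sq : avg (fun t => `|S t| ^+ 2) = \sum_j \sum_l bias R (fun x => mu j x - mu l x).
  rewrite (@eq_avg _ _ _ (fun t => \sum_j \sum_l
        (fun x => @omega_pow R p (mu j x - mu l x)) (dif t))); last first.
    move=> t; rewrite normCK /S rmorph_sum mulr_suml; apply: eq_bigr => j _.
    rewrite mulr_sumr; apply: eq_bigr => l _.
    by rewrite omega_powD // -omega_powN.
  rewrite avg_sum; apply: eq_bigr => j _; rewrite avg_sum; apply: eq_bigr => l _.
  exact: avg_dif.
have b0 : 0 <= b_eps k eps by rewrite /b_eps exprn_ge0 // divr_ge0 // ltW.
have biasle : \sum_j \sum_l bias R (fun x => mu j x - mu l x)
     <= n.+1%:R + n.+1%:R ^+ 2 * real_complex R (b_eps k eps).
  apply: (@le_trans _ _ (\sum_(j < n.+1) \sum_(l < n.+1) ((j == l)%:R + real_complex R (b_eps k eps)))).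
    apply: ler_sum => j _; apply: ler_sum => l _.
    case: eqVneq => [<-|ne].
      rewrite /bias (@eq_avg _ _ _ (fun _ => 1)); last by move=> x; rewrite subrr omega_pow0.
      by rewrite avg_const ?cardG_gt0 // lerDl ler0c.
    by rewrite add0r; exact: Hbias.
  rewrite le_eqVlt; apply/orP; left; apply/eqP.
  have E1 : forall j : 'I_n.+1, \sum_(l < n.+1) ((j == l)%:R : R[i]) = 1.
    move=> j; rewrite (bigD1 j) //= eqxx big1 ?addr0 // => l; by rewrite eq_sym => /negbTE ->.
  under eq_bigr => j _ do rewrite big_split /= E1 sumr_const card_ord.
  rewrite big_split /= !sumr_const card_ord.
  by rewrite -mulrnA -[_ *+ (_ * _)]mulr_natl natrM expr2.
have j0 : 'I_n.+1 := ord0.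
have e1 : eps <= 1.
  have : real_complex R e <= 1.
    apply: (le_trans (HP j0)). apply: (le_trans (real_ler_norm _)).
      by apply: ger0_real; apply: le_trans (HP j0); rewrite ler0c /e exprn_ge0 // ltW.
    rewrite Pform. apply: le_trans; first exact: avg_norm.
    rewrite -[X in _ <= X](@avg_const R _ T0 1). apply: avg_le => t.
    by rewrite normrM norm_omega_pow // mulr1 Fp_norm.
  rewrite -(rmorph1 (real_complex R)) lecR /e expr_le1 ?expn_gt0 //; exact: ltW.
have ne0 : 0 <= real_complex R (n.+1%:R * e).
  by rewrite ler0c mulr_ge0 // /e exprn_ge0 // ltW.
have Hsum : real_complex R (n.+1%:R * e) <= \sum_j P j.
  have <- : \sum_(j < n.+1) real_complex R e = real_complex R (n.+1%:R * e).
    by rewrite sumr_const card_ord rmorphM rmorph_nat mulr_natl.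
  by apply: ler_sum => j _; exact: HP.
have H1 : real_complex R (n.+1%:R * e) <= avg (fun t => `|S t|).
  apply: le_trans normSum. rewrite ger0_norm //. exact: le_trans Hsum.
have H2 : real_complex R ((n.+1%:R * e) ^+ 2) <= n.+1%:R + n.+1%:R ^+ 2 * real_complex R (b_eps k eps).
  rewrite rmorphXn. apply: le_trans biasle. rewrite -sq.
  apply: le_trans; last by apply: avg_jensen => // t; exact: normr_ge0.
  apply: lerXn2r => //; rewrite nnegrE //. exact: le_trans H1.
apply: final_real => //.
move: H2. by rewrite -(rmorph_nat (real_complex R)) -rmorphXn -rmorphM -rmorphD lecR.
Qed.
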